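(* Let $\bm{\mu}\in X^{\mathcal{L}(\mathcal{T})}$ with $V_{s_0}(\bm{\mu})\neq\theta$. Let $\ell\in\mathcal{L}(\mathcal{T})$ satisfy $w^{s_0}_\ell(\bm{\mu})>0$ and let $s_0,s_1,\dots,s_k=\ell$ be the nodes on the path from the root to $\ell$. Then for every $s\in\{s_0,s_1,\dots,s_k\}$, \[w^s_\ell(\bm{\mu})=\frac{d_s(\bm{\mu})}{d(\mu_\ell,\theta)}.\]
   Context: $\mathcal{T}$ is a finite rooted tree with node set $S$, root $s_0$, children $\mathcal{C}(s)$, leaves $\mathcal{L}(\mathcal{T})$, $\mathcal{D}(s)$ the leaves descending from $s$; internal labels $L(s)\in\{\text{MAX},\text{MIN}\}$. $X\subseteq\mathbb{R}$ mean-parameter set of a one-parameter exponential family; $d(x,y)$ KL divergence between members with means $x,y$; threshold $\theta\in X$. $V_s(\bm{\mu})=\mu_s$ at leaves, max/min of children's values at MAX/MIN nodes; $a_s(\bm{\mu})=$'win' iff $V_s(\bm{\mu})\ge\theta$. Recursive weights: $a^*=a_{s_0}(\bm{\mu})$; $P=$MAX, $Q=$MIN if $a^*=$'win', swapped if 'lose'. Leaf $s$: $w^s_s=1$, $d_s=d(\mu_s,\theta)$ if ($a^*=$'win', $\mu_s\ge\theta$) or ($a^*=$'lose', $\mu_s<\theta$), else $0$. $L(s)=P$: $d_s=\max_c d_c$, fixed $c^*(s)\in\arg\max_c d_c$, if $d_s>0$: $w^s_\ell=w^{c^*(s)}_\ell$ on $\mathcal{D}(c^*(s))$, $0$ elsewhere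 in $\mathcal{D}(s)$. $L(s)=Q$, all $d_c>0$: $d_s=(\sum_c1/d_c)^{-1}$, $w^s_\ell=\frac{w^c_\ell/d_c}{\sum_{c'}1/d_{c'}}$ for $\ell\in\mathcal{D}(c)$. $L(s)=Q$ otherwise: $d_s=0$. Internal $s$ with $d_s=0$: $\bm{w}^s$ fixed arbitrary probability vector on $\mathcal{D}(s)$. *)

(* Defs.v *)
From Stdlib Require List.
From mathcomp Require Import all_boot all_order all_algebra.
Set Implicit Arguments. Unset Strict Implicit. Unset Printing Implicit Defensive.
Import Order.TTheory GRing.Theory Num.Theory.
Local Open Scope ring_scope.

(* Leaves carry a label (a nat, the leaf's name,
   used to index the mean vector mu); internal nodes carry their label
   L(s) : true = MAX, false = MIN, and the list of their children.
   A node of the tree is identified with the subtree rooted at it. *)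
Inductive tree : Type :=
| Leaf of nat
| Node of bool & seq tree.

Fixpoint leaves (t : tree) : seq nat :=
  match t with
  | Leaf l => [:: l]
  | Node _ cs => flatten (map leaves cs)
  end.

Fixpoint wf (t : tree) : bool :=
  match t with
  | Leaf _ => true
  | Node _ cs => (size cs != 0%N) && all wf cs
  end.

Inductive subtree : tree -> tree -> Prop :=
| st_refl t : subtree t t
| st_child b cs c s : List.In c cs -> subtree s c -> subtree s (Node b cs).

Inductive on_path (l : nat) : tree -> tree -> Prop :=
| op_here t : l \in leaves t -> on_path l t t
| op_child b cs c s : List.In c cs -> on_path l s c -> on_path l s (Node b cs).

Section GameTree.
Variable R : realFieldType.

Definition seqmax (s : seq R) : R :=
  if s is x :: s' then foldr Num.max x s' else 0.
Definition seqmin (s : seq R) : R :=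
  if s is x :: s' then foldr Num.min x s' else 0.

Variable mu : nat -> R.

Fixpoint value (t : tree) : R :=
  match t with
  | Leaf l => mu l
  | Node b cs => if b then seqmax (map value cs) else seqmin (map value cs)
  end.

Variable dist : R -> R -> R.
Variable theta : R.
Variable win : bool.

(* d_s(mu).  A node is a P-node iff its label (true = MAX) equals win. *)
Fixpoint dval (t : tree) : R :=
  match t with
  | Leaf l =>
      if (win && (theta <= mu l)) || (~~ win && (mu l < theta))
      then dist (mu l) theta else 0
  | Node b cs =>
      let ds := map dval cs in
      if b == win then seqmax ds
      else if all (fun x => 0 < x) ds then (\sum_(x <- ds) x^-1)^-1 else 0
  end.

Variable cstar : tree -> nat.
Variable arb : tree -> nat -> R.     (* fixed arbitrary probability vectors *)

Fixpoint weight (t : tree) (l : nat) : R :=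
  match t with
  | Leaf l' => if l == l' then 1 else 0
  | Node b cs =>
      let ws := map (fun c => weight c l) cs in
      if dval t == 0 then arb t l
      else if b == win then
        (if l \in leaves (nth (Leaf 0) cs (cstar t))
         then nth 0 ws (cstar t) else 0)
      else
        \sum_(p <- zip ws cs | l \in leaves p.2)
           (p.1 / dval p.2) / (\sum_(c <- cs) (dval c)^-1)
  end.

End GameTree.

(* Main.v *)
Require Import Defs.
From mathcomp Require Import all_boot all_order all_algebra.
From mathcomp Require Import ring lra.
Import Order.TTheory GRing.Theory Num.Theory.
Set Implicit Arguments. Unset Strict Implicit. Unset Printing Implicit Defensive.
Local Open Scope ring_scope.

Definition tree_ind' (P : tree -> Prop) (HL : forall n, P (Leaf n))
  (HN : forall b cs, (forall c, List.In c cs -> P c) -> P (Node b cs)) : forall t, P t :=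
  fix F t := match t with
  | Leaf n => HL n
  | Node b cs => HN b cs ((fix G cs : forall c, List.In c cs -> P c :=
       match cs with
       | nil => fun c H => False_ind _ H
       | c0 :: cs' => fun c H => match H with
           | or_introl e => eq_ind c0 P (F c0) c e
           | or_intror H' => G cs' c H' end end) cs) end.

Lemma in_flat (cs : seq tree) c : List.In c cs -> {subset leaves c <= flatten (map leaves cs)}.
Proof.
elim: cs => [//|a cs IH] /= [->|H] x hx; rewrite mem_cat ?hx //.
by rewrite IH // orbT.
Qed.

Lemma flat_in (cs : seq tree) l : l \in flatten (map leaves cs) ->
  exists c, List.In c cs /\ l \in leaves c.
Proof.
elim: cs => [//|a cs IH] /=; rewrite mem_cat => /orP [h|/IH [c [h1 h2]]].
  by exists a; split; [left|].
by exists c; split; [right|].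
Qed.

Lemma allIn (T : Type) (P : pred T) cs c : all P cs -> List.In c cs -> P c.
Proof. elim: cs => [//|a cs IH] /= /andP [h1 h2] [<-|H] //; exact: IH. Qed.

Lemma Inall (T : Type) (P : pred T) cs : (forall c, List.In c cs -> P c) -> all P cs.
Proof. elim: cs => [//|a cs IH] /= H; rewrite H ?IH //; [move=> c hc; apply: H|]; by [right|left]. Qed.

Lemma in_map_In (T : Type) (R : eqType) (f : T -> R) cs y : y \in map f cs ->
  exists c, List.In c cs /\ y = f c.
Proof.
elim: cs => [//|a cs IH] /=; rewrite in_cons => /orP [/eqP ->|/IH [c [h1 h2]]].
  by exists a; split; [left|].
by exists c; split; [right|].
Qed.

Lemma In_map_in (T : Type) (R : eqType) (f : T -> R) cs c : List.In c cs -> f c \in map f cs.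
Proof. elim: cs => [//|a cs IH] /= [->|H]; rewrite in_cons; [by rewrite eqxx|by rewrite (IH H) orbT]. Qed.

Lemma In_nth (T : Type) (x0 : T) cs k : (k < size cs)%N -> List.In (nth x0 cs k) cs.
Proof. elim: cs k => [//|a cs IH] [|k] /= hk; [by left|right; exact: IH]. Qed.

Lemma subtree_props s t : subtree s t ->
  (wf t -> wf s) /\ (uniq (leaves t) -> uniq (leaves s)) /\ {subset leaves s <= leaves t}.
Proof.
elim=> [t0|b cs c s0 Hin _ [IH1 [IH2 IH3]]]; first by split; [|split].

have [cs1 [cs2 E]] := List.in_split _ _ Hin.
split; [|split].
- move=> /= /andP [_ h]; apply: IH1; apply: (allIn h Hin).
- rewrite /= E map_cat flatten_cat /= cat_uniq cat_uniq => /and3P [_ _ /andP [h _]].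
  exact: IH2.
- move=> x hx; exact: (in_flat Hin (IH3 _ hx)).
Qed.

Lemma subtree_trans x y z : subtree x y -> subtree y z -> subtree x z.
Proof.
move=> H1 H2; elim: H2 H1 => [//|b cs c s Hin _ IH H1].
apply: st_child Hin (IH H1).
Qed.

Lemma on_path_leaf l s t : on_path l s t -> l \in leaves t.
Proof. elim=> [//|b cs c s0 Hin _ IH]; exact: (in_flat Hin). Qed.

Lemma uniq_child (cs : seq tree) c k l : uniq (flatten (map leaves cs)) -> List.In c cs ->
  l \in leaves c -> (k < size cs)%N -> l \in leaves (nth (Leaf 0) cs k) -> c = nth (Leaf 0) cs k.
Proof.
elim: cs k => [//|a cs IH] k /=; rewrite cat_uniq => /and3P [_ hd hu] [E|Hin] hl.
- subst c; case: k => [//|k] /= hk hk'.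
  have := in_flat (In_nth (Leaf 0) hk) hk'.
  by move=> h; move/hasPn: hd => /(_ l h); rewrite hl.
- case: k => [|k] /= hk hk'.
  + by move/hasPn: hd => /(_ l (in_flat Hin hl)); rewrite hk'.
  + exact: IH.
Qed.

Lemma sum_none (R : realFieldType) (A : Type) (f : tree -> A) (F : A * tree -> R) l cs :
  l \notin flatten (map leaves cs) ->
  \sum_(p <- zip (map f cs) cs | l \in leaves p.2) F p = 0.
Proof.
elim: cs => [|a cs IH] /=; first by rewrite big_nil.
rewrite mem_cat negb_or => /andP [h1 h2]; rewrite big_cons /= (negbTE h1); exact: IH.
Qed.

Lemma sum_child (R : realFieldType) (A : Type) (f : tree -> A) (F : A * tree -> R) l cs c :
  uniq (flatten (map leaves cs)) -> List.In c cs -> l \in leaves c ->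
  \sum_(p <- zip (map f cs) cs | l \in leaves p.2) F p = F (f c, c).
Proof.
elim: cs => [//|a cs IH] /=; rewrite cat_uniq => /and3P [_ hd hu] [E|Hin] hl;
  rewrite big_cons /=.
- subst c; rewrite hl sum_none ?addr0 //.
  by apply/negP => h; move/hasPn: hd => /(_ l h); rewrite hl.
- have -> : (l \in leaves a) = false.
    by apply/negP => h; move/hasPn: hd => /(_ l (in_flat Hin hl)); rewrite h.
  exact: IH.
Qed.

Lemma seqmax_ge (R : realFieldType) (s : seq R) y : y \in s -> y <= seqmax s.
Proof.
case: s => [//|x s]; rewrite /=; elim: s y => [|z s IH] y /=.
  by rewrite in_cons orbF => /eqP ->.
rewrite !in_cons => /or3P [/eqP ->|/eqP ->|h]; rewrite le_max.
- by apply/orP; right; apply: IH; rewrite in_cons eqxx.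
- by rewrite lexx.

- by apply/orP; right; apply: IH; rewrite in_cons h orbT.
Qed.

Lemma seqmin_le (R : realFieldType) (s : seq R) y : y \in s -> seqmin s <= y.
Proof.
case: s => [//|x s]; rewrite /=; elim: s y => [|z s IH] y /=.
  by rewrite in_cons orbF => /eqP ->.
rewrite !in_cons => /or3P [/eqP ->|/eqP ->|h]; rewrite ge_min.
- by apply/orP; right; apply: IH; rewrite in_cons eqxx.
- by rewrite lexx.

- by apply/orP; right; apply: IH; rewrite in_cons h orbT.
Qed.

Lemma seqmax_in (R : realFieldType) (s : seq R) : s != [::] -> seqmax s \in s.
Proof.
case: s => [//|x s] _; rewrite /=; elim: s => [|z s IH] /=; first by rewrite in_cons eqxx.
rewrite maxEle; case: ifP => _; rewrite !in_cons ?eqxx ?orbT //.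
by move: IH; rewrite in_cons => /orP [->|->]; rewrite ?orbT.
Qed.

Lemma seqmin_in (R : realFieldType) (s : seq R) : s != [::] -> seqmin s \in s.
Proof.
case: s => [//|x s] _; rewrite /=; elim: s => [|z s IH] /=; first by rewrite in_cons eqxx.
rewrite minEle; case: ifP => _; rewrite !in_cons ?eqxx ?orbT //.
by move: IH; rewrite in_cons => /orP [->|->]; rewrite ?orbT.
Qed.

Lemma suminv_ge0 (R : realFieldType) (s : seq R) : all (fun x => 0 < x) s -> 0 <= \sum_(x <- s) x^-1.
Proof.
elim: s => [|x s IH] /=; first by rewrite big_nil.
move=> /andP [h1 h2]; rewrite big_cons; apply: addr_ge0; [by rewrite invr_ge0 ltW|exact: IH].
Qed.

Lemma suminv_gt0 (R : realFieldType) (s : seq R) : all (fun x => 0 < x) s -> s != [::] -> 0 < \sum_(x <- s) x^-1.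
Proof.
case: s => [//|x s] /= /andP [h1 h2] _; rewrite big_cons.
have := suminv_ge0 h2; have : 0 < x^-1 by rewrite invr_gt0.
move=> a b; lra.
Qed.


Lemma dpos (R : realFieldType) (X : R -> Prop) (dist : R -> R -> R)
  (hdist : forall x y, X x -> X y -> 0 <= dist x y /\ (dist x y = 0 <-> x = y))
  (theta : R) (Xtheta : X theta) (mu : nat -> R) (win : bool) :
  forall t, wf t -> (forall l, l \in leaves t -> X (mu l)) ->
  (if win then theta < value mu t else value mu t < theta) -> 0 < dval mu dist theta win t.
Proof.
elim/tree_ind' => [n|b cs IH] /=.
  move=> _ hX hv; have hn : X (mu n) by apply: hX; rewrite in_cons eqxx.
  have [h0 h1] := hdist _ _ hn Xtheta.
  have ne : mu n != theta by apply/eqP => E; move: hv; rewrite E ltxx; case: win.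
  have -> : (win && (theta <= mu n)) || (~~ win && (mu n < theta)) = true.
    by case: win hv => /= hv; rewrite ?(ltW hv) ?hv.
  rewrite lt_def h0 andbT; apply/eqP => /h1 E; by rewrite E eqxx in ne.
move=> /andP [hsz hwf] hX hv.
have IHc : forall c, List.In c cs ->
    (if win then theta < value mu c else value mu c < theta) -> 0 < dval mu dist theta win c.
  move=> c hc; have H := IH c hc; apply: H; first exact: allIn hwf hc.
  move=> l hl; apply: hX. exact: (in_flat hc)...
have ne : map (value mu) cs != [::] by move: hsz; case: (cs).
clear IH; case: b hv; case: win IHc => IHc hv /=.
- have [c [hc E]] := in_map_In (seqmax_in ne); rewrite E in hv.
  apply: lt_le_trans (IHc c hc hv) _; apply: seqmax_ge; exact: In_map_in hc.
- have hall : all (fun x => 0 < x) (map (dval mu dist theta false) cs).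
    rewrite all_map; apply: Inall => c hc /=; have H := IHc c hc; apply: H.
    apply: le_lt_trans hv; apply: seqmax_ge; exact: In_map_in hc.
  rewrite hall invr_gt0; apply: suminv_gt0 hall _; by move: hsz; case: (cs).
- have hall : all (fun x => 0 < x) (map (dval mu dist theta true) cs).
    rewrite all_map; apply: Inall => c hc /=; have H := IHc c hc; apply: H.
    apply: lt_le_trans hv _; apply: seqmin_le; exact: In_map_in hc.
  rewrite hall invr_gt0; apply: suminv_gt0 hall _; by move: hsz; case: (cs).
- have [c [hc E]] := in_map_In (seqmin_in ne); rewrite E in hv.
  apply: lt_le_trans (IHc c hc hv) _; apply: seqmax_ge; exact: In_map_in hc.
Qed.

Lemma weight_node (R : realFieldType) (mu : nat -> R) dist theta win cstar arb b cs l :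
  weight mu dist theta win cstar arb (Node b cs) l =
  if dval mu dist theta win (Node b cs) == 0 then arb (Node b cs) l
  else if b == win then
    (if l \in leaves (nth (Leaf 0) cs (cstar (Node b cs)))
     then nth 0 (map (fun c => weight mu dist theta win cstar arb c l) cs) (cstar (Node b cs)) else 0)
  else
    \sum_(p <- zip (map (fun c => weight mu dist theta win cstar arb c l) cs) cs | l \in leaves p.2)
      (p.1 / dval mu dist theta win p.2) / (\sum_(c <- cs) (dval mu dist theta win c)^-1).
Proof. by []. Qed.

Lemma step (R : realFieldType) (mu : nat -> R) dist theta win cstar arb T
  (hcstar : forall b cs, subtree (Node b cs) T -> b = win ->
     (cstar (Node b cs) < size cs)%N /\
     dval mu dist theta win (nth (Leaf 0) cs (cstar (Node b cs)))
       = dval mu dist theta win (Node b cs))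
  (uniqT : uniq (leaves T)) b cs l (sub : subtree (Node b cs) T)
  (hw : 0 < weight mu dist theta win cstar arb (Node b cs) l)
  (hd : dval mu dist theta win (Node b cs) != 0) c (Hc : List.In c cs)
  (hlc : l \in leaves c) (D : R) :
  (0 < weight mu dist theta win cstar arb c l /\ dval mu dist theta win c != 0) /\
  (weight mu dist theta win cstar arb c l = dval mu dist theta win c / D ->
   weight mu dist theta win cstar arb (Node b cs) l = dval mu dist theta win (Node b cs) / D).
Proof.
have hu : uniq (flatten (map leaves cs)).
  by have [_ [h _]] := subtree_props sub; exact: h uniqT.
case: (b =P win) => hb.
- have hbw : (b == win) = true by apply/eqP.
  have [hk hdk] := hcstar _ _ sub hb.
  have hin : l \in leaves (nth (Leaf 0) cs (cstar (Node b cs))).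
    apply/negPn/negP => hn; move: hw.
    by rewrite weight_node (negbTE hd) hbw (negbTE hn) ltxx.
  have Ec := uniq_child hu Hc hlc hk hin.
  have Ew : weight mu dist theta win cstar arb (Node b cs) l = weight mu dist theta win cstar arb c l.
    by rewrite weight_node (negbTE hd) hbw hin (nth_map (Leaf 0)) // -Ec.
  rewrite Ew in hw *; rewrite -hdk -Ec; rewrite -hdk -Ec in hd.
  by split.
- have hbw : (b == win) = false by apply/eqP.
  have hdN : dval mu dist theta win (Node b cs) =
     if all (fun x => 0 < x) (map (dval mu dist theta win) cs)
     then (\sum_(x <- map (dval mu dist theta win) cs) x^-1)^-1 else 0.
    by rewrite /= hbw.
  have hall : all (fun x => 0 < x) (map (dval mu dist theta win) cs).
    by move: hd; rewrite hdN; case: ifP => //; rewrite eqxx.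
  set S := \sum_(c0 <- cs) (dval mu dist theta win c0)^-1.
  have hS : \sum_(x <- map (dval mu dist theta win) cs) x^-1 = S by rewrite big_map.
  have hdc : 0 < dval mu dist theta win c.
    by move: hall; rewrite all_map => h; exact: (allIn h Hc).
  have Sgt0 : 0 < S.
    rewrite -hS; apply: suminv_gt0 hall _; by move: Hc; case: (cs).
  have Ew : weight mu dist theta win cstar arb (Node b cs) l =
      (weight mu dist theta win cstar arb c l / dval mu dist theta win c) / S.
    by rewrite weight_node (negbTE hd) hbw (sum_child _ _ hu Hc hlc).
  have Edt : dval mu dist theta win (Node b cs) = S^-1 by rewrite hdN hall hS.
  have hc0 : dval mu dist theta win c != 0 by rewrite gt_eqF.
  have hS0 : S != 0 by rewrite gt_eqF.
  split; first split => //.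
    have -> : weight mu dist theta win cstar arb c l =
       weight mu dist theta win cstar arb (Node b cs) l * S * dval mu dist theta win c.
      by rewrite Ew; field; rewrite hc0 hS0.
    by rewrite mulr_gt0 // mulr_gt0.
  move=> E; rewrite Ew E Edt.
  by rewrite [dval mu dist theta win c / D]mulrC -(mulrA (D^-1)) divff // mulr1 [LHS]mulrC.
Qed.

Lemma lemA (R : realFieldType) (mu : nat -> R) dist theta win cstar arb T
  (hcstar : forall b cs, subtree (Node b cs) T -> b = win ->
     (cstar (Node b cs) < size cs)%N /\
     dval mu dist theta win (nth (Leaf 0) cs (cstar (Node b cs)))
       = dval mu dist theta win (Node b cs))
  (uniqT : uniq (leaves T)) l :
  forall t, subtree t T -> l \in leaves t ->
  0 < weight mu dist theta win cstar arb t l -> dval mu dist theta win t != 0 ->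
  weight mu dist theta win cstar arb t l = dval mu dist theta win t / dist (mu l) theta.
Proof.
elim/tree_ind' => [n|b cs IH] sub hl hw hd.
- move: hl; rewrite /= in_cons orbF => /eqP El; rewrite El eqxx.
  move: hd => /=; case: ifP => _ hd; last by rewrite eqxx in hd.
  by rewrite divff.
- have [c [hc hlc]] := flat_in hl.
  have [[h1 h2] h3] := step hcstar uniqT sub hw hd hc hlc (dist (mu l) theta).
  apply: h3; apply: IH => //.
  exact: subtree_trans (@st_child b cs c c hc (st_refl c)) sub.
Qed.

Theorem proposition2
  (R : realFieldType) (X : R -> Prop) (dist : R -> R -> R)
  (hdist : forall x y, X x -> X y -> 0 <= dist x y /\ (dist x y = 0 <-> x = y))
  (theta : R) (Xtheta : X theta)
  (T : tree) (wfT : wf T) (uniqT : uniq (leaves T))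
  (mu : nat -> R) (Xmu : forall l, l \in leaves T -> X (mu l))
  (cstar : tree -> nat)
  (hcstar : forall b cs, subtree (Node b cs) T -> b = (theta <= value mu T) ->
     (cstar (Node b cs) < size cs)%N /\
     dval mu dist theta (theta <= value mu T) (nth (Leaf 0) cs (cstar (Node b cs)))
       = dval mu dist theta (theta <= value mu T) (Node b cs))
  (arb : tree -> nat -> R)
  (harb : forall b cs, subtree (Node b cs) T ->
     dval mu dist theta (theta <= value mu T) (Node b cs) = 0 ->
     (forall l, 0 <= arb (Node b cs) l) /\
     (forall l, l \notin leaves (Node b cs) -> arb (Node b cs) l = 0) /\
     \sum_(l <- leaves (Node b cs)) arb (Node b cs) l = 1)
  (hV : value mu T != theta)
  (l : nat) (hl : l \in leaves T)
  (hw : 0 < weight mu dist theta (theta <= value mu T) cstar arb T l) :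
  forall s, on_path l s T ->
    weight mu dist theta (theta <= value mu T) cstar arb s l
    = dval mu dist theta (theta <= value mu T) s / dist (mu l) theta.
Proof.
set win := (theta <= value mu T) in hcstar harb hw *.
have main : forall s t, on_path l s t -> subtree t T ->
    0 < weight mu dist theta win cstar arb t l -> dval mu dist theta win t != 0 ->
    weight mu dist theta win cstar arb s l = dval mu dist theta win s / dist (mu l) theta.
  move=> s t H; elim: H => [t0 hl0|b cs c s0 Hin Hp IH] sub hw0 hd0.
  - exact: (lemA hcstar uniqT sub hl0 hw0 hd0).
  - have hlc := on_path_leaf Hp.
    have [[h1 h2] _] := step hcstar uniqT sub hw0 hd0 Hin hlc (dist (mu l) theta).
    apply: IH => //.
    exact: subtree_trans (@st_child b cs c c Hin (st_refl c)) sub.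
move=> s Hs; apply: main Hs (st_refl T) hw _.
rewrite gt_eqF //; apply: (dpos hdist Xtheta wfT Xmu).
rewrite /win; case: ifP => h.
  by rewrite lt_neqAle h eq_sym hV.
by rewrite ltNge h.
Qed.
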